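(* Let $T:\mathbb{R}^{M}\times\cdots\times\mathbb{R}^{M}\to\mathbb{R}^D$ ($N$ factors) be a real $N$-linear map with coefficients $T_{i,s}$, $i\in\{1,\dots,D\}$, $s\in\{1,\dots,M\}^N$, which is norm-preserving: $\big\|T(a^{(1)},\dots,a^{(N)})\big\|=\prod_{k=1}^N\|a^{(k)}\|$ for all $a^{(k)}\in\mathbb{R}^M$, where $T(a^{(1)},\dots,a^{(N)})_i=\sum_s T_{i,s}\prod_k a^{(k)}_{s_k}$ and $\|\cdot\|$ is the Euclidean norm. Let $\rho$ be a density operator on $\mathcal{H}_1\otimes\cdots\otimes\mathcal{H}_N$ which has positive partial transpose with respect to all bipartitions, i.e. $\rho^{T_\tau}\ge 0$ for every subset $\tau\subseteq\{1,\dots,N\}$. Then for all Hermitian operators $A^{(k)}_j$ on $\mathcal{H}_k$ ($k=1,\dots,N$, $j=1,\dots,M$), $$\sum_{i=1}^D\Big(\sum_{s}T_{i,s}\,\mathrm{tr}\big[\rho\,A^{(1)}_{s_1}\otimes\cdots\otimes A^{(N)}_{s_N}\big]\Big)^2\le\sum_{s}\mathrm{tr}\big[\rho\,(A^{(1)}_{s_1})^2\otimes\cdots\otimes(A^{(N)}_{s_N})^2\big].$$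
   Context: $\mathcal{H}_1,\dots,\mathcal{H}_N$ are finite-dimensional complex Hilbert spaces, each with a fixed orthonormal basis; for $\tau\subseteq\{1,\dots,N\}$, $\rho^{T_\tau}$ denotes the partial transpose of $\rho$ with respect to the tensor factors in $\tau$ (in these bases). A density operator is a positive semidefinite operator of trace one. *)

(* Defs.v *)
From HB Require Import structures.
From mathcomp Require Import all_boot all_order all_algebra.
From mathcomp Require Import reals.
From mathcomp Require Import complex.
Set Implicit Arguments. Unset Strict Implicit. Unset Printing Implicit Defensive.
Import Order.TTheory GRing.Theory Num.Theory.
Local Open Scope ring_scope.
Local Open Scope complex_scope.

Section QuantumDefs.
Variable R : realType.
Local Notation C := R[i].

(* Multi-index type for a basis of H_1 (x) ... (x) H_N, dim H_k = d k. *)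
Definition mindex (N : nat) (d : 'I_N -> nat) : finType :=
  {dffun forall k : 'I_N, 'I_(d k)}.

(* Operators on the tensor product, as matrices in the product basis. *)
Definition top (N : nat) (d : 'I_N -> nat) := mindex d -> mindex d -> C.

Definition tensor (N : nat) (d : 'I_N -> nat)
  (A : forall k : 'I_N, 'M[C]_(d k)) : top d :=
  fun x y => \prod_(k < N) A k (x k) (y k).

Definition trace_prod (N : nat) (d : 'I_N -> nat) (X Y : top d) : C :=
  \sum_(x : mindex d) \sum_(y : mindex d) X x y * Y y x.

Definition trace_op (N : nat) (d : 'I_N -> nat) (X : top d) : C :=
  \sum_(x : mindex d) X x x.

Definition ptranspose (N : nat) (d : 'I_N -> nat) (tau : {set 'I_N})
  (X : top d) : top d :=
  fun x y =>
    X (finfun (fun k => if k \in tau then y k else x k) : mindex d)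
      (finfun (fun k => if k \in tau then x k else y k) : mindex d).

(* Positive semidefinite: <v, X v> >= 0 for all v (order of the complex
   numbers: 0 <= z means z is real and nonnegative). *)
Definition psd (N : nat) (d : 'I_N -> nat) (X : top d) : Prop :=
  forall v : mindex d -> C,
    0 <= \sum_(x : mindex d) \sum_(y : mindex d) (v x)^* * X x y * v y.

Definition density (N : nat) (d : 'I_N -> nat) (rho : top d) : Prop :=
  psd rho /\ trace_op rho = 1.

Definition herm_op (n : nat) (A : 'M[C]_n) : Prop :=
  forall i j, A i j = (A j i)^*.

End QuantumDefs.

Definition mlmap_apply (R : realType) (N M D : nat)
  (T : 'I_D -> {ffun 'I_N -> 'I_M} -> R) (a : 'I_N -> 'I_M -> R) (i : 'I_D) : R :=
  \sum_(s : {ffun 'I_N -> 'I_M}) T i s * \prod_(k < N) a k (s k).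

Definition enorm (R : realType) (n : nat) (v : 'I_n -> R) : R :=
  Num.sqrt (\sum_(j < n) v j ^+ 2).

Definition norm_preserving (R : realType) (N M D : nat)
  (T : 'I_D -> {ffun 'I_N -> 'I_M} -> R) : Prop :=
  forall a : 'I_N -> 'I_M -> R,
    enorm (mlmap_apply T a) = \prod_(k < N) enorm (a k).

(* Main.v *)
Require Import Defs.
From HB Require Import structures.
From mathcomp Require Import all_boot all_order all_algebra.
From mathcomp Require Import reals.
From mathcomp Require Import complex.
From mathcomp Require Import ring.
Import Order.TTheory GRing.Theory Num.Theory.
Local Open Scope ring_scope.
Local Open Scope complex_scope.
Set Implicit Arguments. Unset Strict Implicit. Unset Printing Implicit Defensive.

Lemma sum_dffun_prod (R : comPzSemiRingType) (N : nat) (d : 'I_N -> nat)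
  (F : forall k : 'I_N, 'I_(d k) -> R) :
  \sum_(x : mindex d) \prod_(k < N) F k (x k) = \prod_(k < N) \sum_(j : 'I_(d k)) F k j.
Proof.
pose P_ := fun k => [ffun j : 'I_(d k) => F k j].
transitivity (\prod_(k < N) \sum_(j in tagged_with (fun k => 'I_(d k)) k) untag 0 (P_ k) j); last first.
  apply: eq_bigr => k _; rewrite -(big_tag (fun k => fun_of_fin (P_ k)) k).
  by apply: eq_bigr => j _; rewrite ffunE.
rewrite bigA_distr_big_dep -big_fprod.
rewrite (reindex (@fprod_of_dffun _ (fun k => 'I_(d k)))); last first.
  exists (@dffun_of_fprod _ _) => x _; [exact: fprod_of_dffunK | exact: dffun_of_fprodK].
apply: eq_bigr => x _; apply: eq_bigr => k _; by rewrite ffunE fprodE.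
Qed.

Section Dec.
Variables (R : realType) (M : nat).
Local Notation C := R[i].

Lemma sum_delta (I : finType) (F : I -> C) (a : I) : \sum_(i : I) F i * (a == i)%:R = F a.
Proof.
rewrite (bigD1 a) //= eqxx mulr1 big1 ?addr0 // => i /negbTE.
by rewrite eq_sym => ->; rewrite mulr0.
Qed.

Definition sgb (e : bool) : R := if e then 1 else -1.
Definition rr (p : 'I_M * 'I_M * bool) (a : 'I_M) : R :=
  (a == p.1.1)%:R + sgb p.2 * (a == p.1.2)%:R.
Definition cc (Bk : 'I_M -> 'I_M -> C) (p : 'I_M * 'I_M * bool) : C :=
  Bk p.1.1 p.1.2 / 4%:R * (sgb p.2)%:C.

Lemma sym_dec (Bk : 'I_M -> 'I_M -> C) (hs : forall a b, Bk a b = Bk b a) a b :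
  Bk a b = \sum_(p : 'I_M * 'I_M * bool) cc Bk p * (rr p a * rr p b)%:C.
Proof.
transitivity (\sum_(i : 'I_M) \sum_(j : 'I_M) \sum_(e : bool) cc Bk (i, j, e) * (rr (i, j, e) a * rr (i, j, e) b)%:C); last first.
  by rewrite pair_bigA pair_bigA; apply: eq_bigr => -[[i j] e].
have e : forall i j : 'I_M, \sum_(e : bool) cc Bk (i, j, e) * (rr (i, j, e) a * rr (i, j, e) b)%:C
   = (Bk i j / 2%:R * (a == i)%:R) * (b == j)%:R + (Bk j i / 2%:R * (b == i)%:R) * (a == j)%:R.
  move=> i j; rewrite big_bool /cc /rr /sgb /= -(hs i j).
  rewrite !rmorphM /= !rmorphD /= !rmorphM /= !rmorphN !rmorph_nat !rmorph1.
  by field.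
symmetry.
under eq_bigr => i _ do under eq_bigr => j _ do rewrite e.
under eq_bigr => i _ do rewrite big_split /= !sum_delta.
rewrite big_split /= !sum_delta; by field.
Qed.
End Dec.

Section Main.
Variables (R : realType) (N M D : nat) (T : 'I_D -> {ffun 'I_N -> 'I_M} -> R).
Hypothesis hT : norm_preserving T.

Definition G (s t : {ffun 'I_N -> 'I_M}) : R := \sum_(i < D) T i s * T i t.

Lemma poly_id (r : 'I_N -> 'I_M -> R) :
  \sum_(s : {ffun 'I_N -> 'I_M}) \sum_(t : {ffun 'I_N -> 'I_M})
     G s t * \prod_(k < N) (r k (s k) * r k (t k))
  = \sum_(s : {ffun 'I_N -> 'I_M}) \prod_(k < N) (r k (s k) * r k (s k)).
Proof.
have h := congr1 (fun x => x ^+ 2) (hT r); move: h => /=.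
rewrite /enorm sqr_sqrtr ?sumr_ge0 // => [|i _]; last exact: sqr_ge0.
rewrite -prodrXl.
have e : forall k : 'I_N, Num.sqrt (\sum_(j < M) r k j ^+ 2) ^+ 2 = \sum_(j < M) r k j ^+ 2.
  by move=> k; rewrite sqr_sqrtr // sumr_ge0 // => j _; exact: sqr_ge0.
under [in RHS]eq_bigr => k _ do rewrite e.
rewrite bigA_distr_bigA /= => h.
transitivity (\sum_(s : {ffun 'I_N -> 'I_M}) \prod_(k < N) r k (s k) ^+ 2); last first.
  by apply: eq_bigr => s _; apply: eq_bigr => k _; rewrite expr2.
rewrite -h /mlmap_apply.
under eq_bigr => s _ do under eq_bigr => t _ do rewrite big_split /= /G mulr_suml.
under eq_bigr => s _ do rewrite exchange_big /=.
rewrite exchange_big /=; apply: eq_bigr => i _.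
rewrite expr2 big_distrlr /=; apply: eq_bigr => s _; apply: eq_bigr => t _.
by rewrite mulrACA.
Qed.

Local Notation C := R[i].
Local Notation sf := {ffun 'I_N -> 'I_M}.

Definition Phi (B : 'I_N -> 'I_M -> 'I_M -> C) : C :=
  \sum_(s : sf) \sum_(t : sf) (G s t)%:C * \prod_(k < N) B k (s k) (t k)
  - \sum_(s : sf) \prod_(k < N) B k (s k) (s k).

Definition upd (B : 'I_N -> 'I_M -> 'I_M -> C) (k0 : 'I_N) (Bk : 'I_M -> 'I_M -> C) :
  'I_N -> 'I_M -> 'I_M -> C := fun k => if k == k0 then Bk else B k.

Lemma Phi_ext B B' : (forall k a b, B k a b = B' k a b) -> Phi B = Phi B'.
Proof.
move=> e; rewrite /Phi; congr (_ - _).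
  apply: eq_bigr => s _; apply: eq_bigr => t _; congr (_ * _).
  by apply: eq_bigr => k _; rewrite e.
by apply: eq_bigr => s _; apply: eq_bigr => k _; rewrite e.
Qed.

Lemma prod_lin (P : finType) B k0 (c : P -> C) (Rp : P -> 'I_M -> 'I_M -> C)
  (hB : forall a b, B k0 a b = \sum_p c p * Rp p a b) (s t : sf) :
  \prod_(k < N) B k (s k) (t k)
  = \sum_p c p * \prod_(k < N) upd B k0 (Rp p) k (s k) (t k).
Proof.
rewrite (bigD1 k0) //= hB mulr_suml; apply: eq_bigr => p _.
rewrite [in RHS](bigD1 k0) //= /upd eqxx -mulrA; congr (_ * (_ * _)).
by apply: eq_bigr => k /negbTE ->.
Qed.

Lemma Phi_lin (P : finType) B k0 (c : P -> C) (Rp : P -> 'I_M -> 'I_M -> C)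
  (hB : forall a b, B k0 a b = \sum_p c p * Rp p a b) :
  Phi B = \sum_p c p * Phi (upd B k0 (Rp p)).
Proof.
rewrite /Phi; symmetry.
under eq_bigr => p _ do rewrite mulrBr !mulr_sumr.
rewrite sumrB; congr (_ - _).
  rewrite exchange_big; apply: eq_bigr => s _.
  under eq_bigr => p _ do rewrite mulr_sumr.
  rewrite exchange_big; apply: eq_bigr => t _.
  rewrite (prod_lin hB s t) mulr_sumr; apply: eq_bigr => p _.
  by rewrite mulrCA.
rewrite exchange_big; apply: eq_bigr => s _.
by rewrite (prod_lin hB s s).
Qed.

Lemma Phi_rank1 (r : 'I_N -> 'I_M -> R) : Phi (fun k a b => (r k a * r k b)%:C) = 0.
Proof.
apply/eqP; rewrite subr_eq0; apply/eqP.
transitivity ((\sum_(s : sf) \sum_(t : sf) G s t * \prod_(k < N) (r k (s k) * r k (t k)))%:C).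
  rewrite rmorph_sum; apply: eq_bigr => s _; rewrite rmorph_sum; apply: eq_bigr => t _.
  by rewrite rmorphM rmorph_prod.
rewrite poly_id rmorph_sum; apply: eq_bigr => s _.
by rewrite rmorph_prod.
Qed.

Lemma K_ind n : (n <= N)%N -> forall B (r : 'I_N -> 'I_M -> R),
  (forall k : 'I_N, (n <= k)%N -> forall a b, B k a b = (r k a * r k b)%:C) ->
  (forall k : 'I_N, (k < n)%N -> forall a b, B k a b = B k b a) -> Phi B = 0.
Proof.
elim: n => [_ B r hr _ | n IH hn B r hr hs].
  by rewrite (@Phi_ext B (fun k a b => (r k a * r k b)%:C)) ?Phi_rank1 // => k a b; rewrite hr.
pose k0 := Ordinal hn.
have hB := sym_dec (hs k0 (ltnSn n)).
rewrite (Phi_lin (c := cc (B k0)) (Rp := fun p a b => (rr R p a * rr R p b)%:C) hB).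
rewrite big1 // => p _.
rewrite (IH (ltnW hn) _ (fun k => if k == k0 then rr R p else r k)) ?mulr0 //.
  move=> k hk a b; rewrite /upd; case: eqP => // /eqP nk.
  apply: hr; rewrite ltn_neqAle hk andbT.
  by apply: contra nk => /eqP e; apply/eqP/val_inj.
move=> k hk a b; rewrite /upd.
have -> : (k == k0) = false.
  by apply/negbTE; apply: contraTneq hk => ->; rewrite ltnn.
by apply: hs; rewrite ltnS ltnW.
Qed.

Lemma K (B : 'I_N -> 'I_M -> 'I_M -> C) (hs : forall k a b, B k a b = B k b a) :
  \sum_(s : sf) \sum_(t : sf) (G s t)%:C * \prod_(k < N) B k (s k) (t k)
  = \sum_(s : sf) \prod_(k < N) B k (s k) (s k).
Proof.
apply/eqP; rewrite -subr_eq0; apply/eqP.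
apply: (@K_ind N (leqnn N) B (fun _ _ => 0)) => k hk.
  by move: (ltn_ord k); rewrite ltnNge hk.
by move=> a b; apply: hs.
Qed.
End Main.

Section CS.
Variables (R : realType) (N : nat) (d : 'I_N -> nat).
Local Notation C := R[i].
Local Notation MI := (mindex d).

Lemma cs (sg : top R d) (hs : psd sg) (htr : trace_op sg = 1) (Y : top R d)
  (hY : forall x y, (Y x y)^*%R = Y y x) :
  (trace_prod sg Y) ^+ 2 <= \sum_(z : MI) \sum_(x : MI) \sum_(y : MI) Y z x * sg x y * Y y z.
Proof.
set t := trace_prod sg Y.
have h z : 0 <= \sum_(x : MI) \sum_(y : MI)
    (Y z x - t * (z == x)%:R) * sg x y * (Y y z - t^*%R * (z == y)%:R).
  apply: (le_trans (hs (fun x => (Y z x - t * (z == x)%:R)^*%R))).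
  rewrite le_eqVlt; apply/orP; left; apply/eqP.
  apply: eq_bigr => x _; apply: eq_bigr => y _.
  by rewrite conjCK rmorphB rmorphM /= rmorph_nat hY.
have E : forall (a b c d1 d2 : C), (a - t * d1) * b * (c - t^*%R * d2)
   = a * b * c - t^*%R * (a * b * d2) - t * (b * c * d1) + t * t^*%R * (b * d1 * d2).
  by move=> *; ring.
have H : 0 <= \sum_(z : MI) \sum_(x : MI) \sum_(y : MI)
    (Y z x - t * (z == x)%:R) * sg x y * (Y y z - t^*%R * (z == y)%:R).
  by apply: sumr_ge0 => z _; exact: h.
move: H.
under eq_bigr => z _ do under eq_bigr => x _ do under eq_bigr => y _ do rewrite E.
under eq_bigr => z _ do under eq_bigr => x _ do rewrite big_split sumrB sumrB /=.
under eq_bigr => z _ do rewrite big_split sumrB sumrB /=.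
rewrite big_split sumrB sumrB /=.
have T2 : \sum_(z : MI) \sum_(x : MI) \sum_(y : MI) t^*%R * (Y z x * sg x y * (z == y)%:R) = t^*%R * t.
  under eq_bigr => z _ do under eq_bigr => x _ do rewrite -mulr_sumr sum_delta.
  under eq_bigr => z _ do rewrite -mulr_sumr.
  rewrite -mulr_sumr; congr (_ * _); rewrite exchange_big; apply: eq_bigr => x _.
  by apply: eq_bigr => z _; rewrite mulrC.
have T3 : \sum_(z : MI) \sum_(x : MI) \sum_(y : MI) t * (sg x y * Y y z * (z == x)%:R) = t * t.
  under eq_bigr => z _ do under eq_bigr => x _ do rewrite -mulr_sumr -mulr_suml.
  under eq_bigr => z _ do rewrite -mulr_sumr sum_delta.
  by rewrite -mulr_sumr.
have T4 : \sum_(z : MI) \sum_(x : MI) \sum_(y : MI) t * t^*%R * (sg x y * (z == x)%:R * (z == y)%:R) = t * t^*%R.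
  under eq_bigr => z _ do under eq_bigr => x _ do rewrite -mulr_sumr sum_delta.
  under eq_bigr => z _ do rewrite -mulr_sumr sum_delta.
  by rewrite -mulr_sumr -[RHS]mulr1 -htr.
rewrite T2 T3 T4 => H.
rewrite -subr_ge0; apply: (le_trans H); rewrite le_eqVlt; apply/orP; left; apply/eqP.
rewrite expr2; ring.
Qed.
End CS.

Section PT.
Variables (R : realType) (N M : nat) (d : 'I_N -> nat).
Local Notation C := R[i].
Local Notation MI := (mindex d).

Definition swp (tau : {set 'I_N}) (x y : MI) : MI :=
  finfun (fun k => if k \in tau then y k else x k).

Lemma swpE tau x y k : swp tau x y k = if k \in tau then y k else x k.
Proof. exact: (ffunE _ k). Qed.

Lemma swpK tau x y : swp tau (swp tau x y) (swp tau y x) = x.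
Proof. apply/(@ffunP _ (fun k => ordinal (d k))) => k; rewrite !swpE; by case: (k \in tau). Qed.

Lemma swpxx tau x : swp tau x x = x.
Proof. apply/(@ffunP _ (fun k => ordinal (d k))) => k; rewrite !swpE; by case: (k \in tau). Qed.

Lemma pt_sum tau (F : MI -> MI -> C) :
  \sum_(x : MI) \sum_(y : MI) F (swp tau x y) (swp tau y x) = \sum_(x : MI) \sum_(y : MI) F x y.
Proof.
rewrite !pair_bigA.
pose h := fun p : MI * MI => (swp tau p.1 p.2, swp tau p.2 p.1).
have hK : cancel h h by move=> [x y]; rewrite /h /= !swpK.
by rewrite [RHS](reindex_inj (can_inj hK)).
Qed.

Lemma pt_entry tau (rho : top R d) x y :
  ptranspose tau rho x y = rho (swp tau x y) (swp tau y x).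
Proof. by []. Qed.

Lemma pt_trace tau (rho : top R d) : trace_op (ptranspose tau rho) = trace_op rho.
Proof. by apply: eq_bigr => x _; rewrite pt_entry swpxx. Qed.


Variable (A : forall k : 'I_N, 'I_M -> 'M[C]_(d k)).
Hypothesis hA : forall (k : 'I_N) (j : 'I_M), herm_op (A k j).

Definition At (tau : {set 'I_N}) k (j : 'I_M) (a b : 'I_(d k)) : C :=
  if k \in tau then A k j b a else A k j a b.

Definition Xop (Tc : {ffun 'I_N -> 'I_M} -> R) (tau : {set 'I_N}) : top R d :=
  fun x y => \sum_(s : {ffun 'I_N -> 'I_M}) (Tc s)%:C * \prod_(k < N) At tau (s k) (x k) (y k).

Lemma cR (r : R) : (r%:C)^*%R = r%:C.
Proof. exact: conjc_real. Qed.

Lemma Xop_herm Tc tau x y : (Xop Tc tau x y)^*%R = Xop Tc tau y x.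
Proof.
rewrite rmorph_sum; apply: eq_bigr => s _; rewrite rmorphM rmorph_prod; congr (_ * _); first exact: cR.
apply: eq_bigr => k _; rewrite /At; case: (k \in tau); by rewrite [RHS]hA.
Qed.

Lemma ctr (rho : top R d) Tc tau :
  trace_prod (ptranspose tau rho) (Xop Tc tau)
  = \sum_(s : {ffun 'I_N -> 'I_M}) (Tc s)%:C * trace_prod rho (tensor (fun k => A k (s k))).
Proof.
rewrite /trace_prod.
pose F := fun x' y' => rho x' y' *
   \sum_(s : {ffun 'I_N -> 'I_M}) (Tc s)%:C * tensor (fun k => A k (s k)) y' x'.
transitivity (\sum_(x : MI) \sum_(y : MI) F (swp tau x y) (swp tau y x)).
  apply: eq_bigr => x _; apply: eq_bigr => y _; rewrite pt_entry /F /=; congr (_ * _).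
  apply: eq_bigr => s _; congr (_ * _); apply: eq_bigr => k _.
  by rewrite /At !swpE; case: (k \in tau).
rewrite (pt_sum tau F) /F.
under eq_bigr => x _ do under eq_bigr => y _ do rewrite mulr_sumr.
under eq_bigr => x _ do rewrite exchange_big.
rewrite exchange_big; apply: eq_bigr => s _; rewrite mulr_sumr; apply: eq_bigr => x _.
rewrite mulr_sumr; apply: eq_bigr => y _; by rewrite mulrCA.
Qed.


Definition Pm (tau : {set 'I_N}) k (s t : 'I_M) : 'M[C]_(d k) :=
  if k \in tau then A k s *m A k t else A k t *m A k s.

Lemma Qform (rho : top R d) Tc tau :
  \sum_(z : MI) \sum_(x : MI) \sum_(y : MI) Xop Tc tau z x * ptranspose tau rho x y * Xop Tc tau y z
  = \sum_(s : {ffun 'I_N -> 'I_M}) \sum_(t : {ffun 'I_N -> 'I_M}) (Tc s * Tc t)%:C *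
      \sum_(x : MI) \sum_(y : MI) rho x y * \prod_(k < N) Pm tau k (s k) (t k) (y k) (x k).
Proof.
rewrite exchange_big /=. under eq_bigr => x _ do rewrite exchange_big /=.
have step1 : forall x y, \sum_(z : MI) Xop Tc tau z x * ptranspose tau rho x y * Xop Tc tau y z
   = \sum_(s : {ffun 'I_N -> 'I_M}) \sum_(t : {ffun 'I_N -> 'I_M}) (Tc s * Tc t)%:C *
      (ptranspose tau rho x y * \prod_(k < N) \sum_(j : 'I_(d k))
          At tau (t k) (y k) j * At tau (s k) j (x k)).
  move=> x y.
  transitivity (\sum_(z : MI) \sum_(s : {ffun 'I_N -> 'I_M}) \sum_(t : {ffun 'I_N -> 'I_M})
     (Tc s * Tc t)%:C * (ptranspose tau rho x y *
        \prod_(k < N) (At tau (t k) (y k) (z k) * At tau (s k) (z k) (x k)))).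
    apply: eq_bigr => z _; rewrite /Xop !mulr_suml; apply: eq_bigr => s _.
    rewrite mulr_sumr; apply: eq_bigr => t _; rewrite big_split /= rmorphM.
    ring.
  rewrite exchange_big; apply: eq_bigr => s _; rewrite exchange_big; apply: eq_bigr => t _.
  rewrite -mulr_sumr -mulr_sumr; congr (_ * (_ * _)).
  exact: (sum_dffun_prod (fun k j => At tau (t k) (y k) j * At tau (s k) j (x k))).
under eq_bigr => x _ do under eq_bigr => y _ do rewrite step1.
under eq_bigr => x _ do rewrite exchange_big.
under eq_bigr => x _ do under eq_bigr => s _ do rewrite exchange_big.
rewrite exchange_big; apply: eq_bigr => s _; rewrite exchange_big; apply: eq_bigr => t _.
under eq_bigr => x _ do rewrite -mulr_sumr.
rewrite -mulr_sumr; congr (_ * _).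
pose F := fun x' y' => rho x' y' * \prod_(k < N) Pm tau k (s k) (t k) (y' k) (x' k).
transitivity (\sum_(x : MI) \sum_(y : MI) F (swp tau x y) (swp tau y x)); last first.
  by rewrite (pt_sum tau F).
apply: eq_bigr => x _; apply: eq_bigr => y _; rewrite pt_entry /F; congr (_ * _).
apply: eq_bigr => k _; rewrite /Pm /At !swpE.
case: (k \in tau) => /=; rewrite mxE; apply: eq_bigr => j _ //.
by rewrite mulrC.
Qed.


Lemma fsum (rho : top R d) (s t : {ffun 'I_N -> 'I_M}) :
  \sum_(f : {ffun 'I_N -> bool}) \sum_(x : MI) \sum_(y : MI)
     rho x y * \prod_(k < N) Pm [set k | f k] k (s k) (t k) (y k) (x k)
  = \sum_(x : MI) \sum_(y : MI)
     rho x y * \prod_(k < N) (A k (s k) *m A k (t k) + A k (t k) *m A k (s k)) (y k) (x k).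
Proof.
rewrite exchange_big; apply: eq_bigr => x _; rewrite exchange_big; apply: eq_bigr => y _.
rewrite -mulr_sumr; congr (_ * _).
pose F := fun k (b : bool) => (if b then A k (s k) *m A k (t k) else A k (t k) *m A k (s k)) (y k) (x k).
transitivity (\sum_(f : {ffun 'I_N -> bool}) \prod_(k < N) F k (f k)).
  by apply: eq_bigr => f _; apply: eq_bigr => k _; rewrite /Pm /F inE.
rewrite -bigA_distr_bigA; apply: eq_bigr => k _.
by rewrite big_bool /F [RHS]mxE.
Qed.

End PT.

Unset Implicit Arguments.

Theorem proposition2 (R : realType) (N M D : nat) (d : 'I_N -> nat)
  (T : 'I_D -> {ffun 'I_N -> 'I_M} -> R)
  (hT : norm_preserving T)
  (rho : top R d)
  (hrho : density rho)
  (hppt : forall tau : {set 'I_N}, psd (ptranspose tau rho))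
  (A : forall k : 'I_N, 'I_M -> 'M[R[i]]_(d k))
  (hA : forall (k : 'I_N) (j : 'I_M), herm_op (A k j)) :
  \sum_(i < D)
     (\sum_(s : {ffun 'I_N -> 'I_M})
        (T i s)%:C * trace_prod rho (tensor (fun k => A k (s k)))) ^+ 2
  <= \sum_(s : {ffun 'I_N -> 'I_M})
        trace_prod rho (tensor (fun k => A k (s k) *m A k (s k))).
Proof.
pose tf := fun f : {ffun 'I_N -> bool} => [set k | f k].
pose Q := fun f i => \sum_(z : mindex d) \sum_(x : mindex d) \sum_(y : mindex d)
   Xop A (T i) (tf f) z x * ptranspose (tf f) rho x y * Xop A (T i) (tf f) y z.
have H : \sum_(f : {ffun 'I_N -> bool}) \sum_(i < D)
     (\sum_(s : {ffun 'I_N -> 'I_M})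
        (T i s)%:C * trace_prod rho (tensor (fun k => A k (s k)))) ^+ 2
   <= \sum_(f : {ffun 'I_N -> bool}) \sum_(i < D) Q f i.
  apply: ler_sum => f _; apply: ler_sum => i _.
  rewrite -(ctr A rho (T i) (tf f)).
  apply: cs.
  - exact: hppt.
  - by rewrite pt_trace; case: hrho.
  - by move=> x y; apply: Xop_herm.
rewrite sumr_const card_ffun card_bool card_ord -mulr_natl in H.
have pos : 0 < (2 ^ N)%:R :> R[i] by rewrite ltr0n expn_gt0.
rewrite -(ler_pM2l pos); apply: (le_trans H).
rewrite le_eqVlt; apply/orP; left; apply/eqP.
rewrite /Q.
under eq_bigr => f _ do under eq_bigr => i _ do rewrite Qform.
under eq_bigr => f _ do rewrite exchange_big.
under eq_bigr => f _ do under eq_bigr => s _ do rewrite exchange_big.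
rewrite exchange_big.
under eq_bigr => s _ do rewrite exchange_big.
transitivity (\sum_(s : {ffun 'I_N -> 'I_M}) \sum_(t : {ffun 'I_N -> 'I_M}) (G T s t)%:C *
   \sum_(x : mindex d) \sum_(y : mindex d) rho x y *
     \prod_(k < N) (A k (s k) *m A k (t k) + A k (t k) *m A k (s k)) (y k) (x k)).
  apply: eq_bigr => s _; apply: eq_bigr => t _.
  under eq_bigr => f _ do rewrite -mulr_suml -rmorph_sum.
  by rewrite -mulr_sumr (fsum A rho s t).
transitivity (\sum_(x : mindex d) \sum_(y : mindex d) rho x y *
   \sum_(s : {ffun 'I_N -> 'I_M}) \sum_(t : {ffun 'I_N -> 'I_M}) (G T s t)%:C *
     \prod_(k < N) (A k (s k) *m A k (t k) + A k (t k) *m A k (s k)) (y k) (x k)).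
  symmetry.
  under eq_bigr => x _ do under eq_bigr => y _ do rewrite mulr_sumr.
  under eq_bigr => x _ do under eq_bigr => y _ do under eq_bigr => s _ do rewrite mulr_sumr.
  under eq_bigr => x _ do rewrite exchange_big.
  under eq_bigr => x _ do under eq_bigr => s _ do rewrite exchange_big.
  rewrite exchange_big.
  under eq_bigr => s _ do rewrite exchange_big.
  apply: eq_bigr => s _; apply: eq_bigr => t _.
  rewrite mulr_sumr; apply: eq_bigr => x _; rewrite mulr_sumr; apply: eq_bigr => y _.
  by rewrite mulrCA.
have KK : forall x y : mindex d,
   \sum_(s : {ffun 'I_N -> 'I_M}) \sum_(t : {ffun 'I_N -> 'I_M}) (G T s t)%:C *
     \prod_(k < N) (A k (s k) *m A k (t k) + A k (t k) *m A k (s k)) (y k) (x k)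
   = \sum_(s : {ffun 'I_N -> 'I_M})
     \prod_(k < N) (A k (s k) *m A k (s k) + A k (s k) *m A k (s k)) (y k) (x k).
  move=> x y.
  apply: (K hT (B := fun k a b => (A k a *m A k b + A k b *m A k a) (y k) (x k))).
  by move=> k a b; rewrite addrC.
under eq_bigr => x _ do under eq_bigr => y _ do rewrite KK.
have add2 : forall n (X : 'M[R[i]]_n) a b, (X + X) a b = 2%:R * X a b.
  by move=> n X a b; rewrite [LHS]mxE mulr_natl mulr2n.
have two : forall (s : {ffun 'I_N -> 'I_M}) (x y : mindex d),
   \prod_(k < N) (A k (s k) *m A k (s k) + A k (s k) *m A k (s k)) (y k) (x k)
   = (2 ^ N)%:R * \prod_(k < N) (A k (s k) *m A k (s k)) (y k) (x k).
  move=> s x y; under eq_bigr => k _ do rewrite add2.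
  by rewrite big_split /= prodr_const card_ord natrX.
under eq_bigr => x _ do under eq_bigr => y _ do under eq_bigr => s _ do rewrite two.
under eq_bigr => x _ do under eq_bigr => y _ do rewrite -mulr_sumr mulrCA.
under eq_bigr => x _ do rewrite -mulr_sumr.
rewrite -mulr_sumr; congr (_ * _).
rewrite /trace_prod /tensor.
under eq_bigr => x _ do under eq_bigr => y _ do rewrite mulr_sumr.
under eq_bigr => x _ do rewrite exchange_big.
by rewrite exchange_big.
Qed.
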